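(* Let $\mathcal A\in\mathbb Q^{n_1\times m\times n_3}$ and $\mathcal B\in\mathbb Q^{m\times n_2\times n_3}$. Then: (1) if $n_1=m$, then $\rho_{QT}(\mathcal A)\le \|\mathcal A\|_s$; (2) $\|\mathcal A*_Q\mathcal B\|_s\le \|\mathcal A\|_s\|\mathcal B\|_s$; (3) $(\mathcal A*_Q\mathcal B)^*=\mathcal B^**_Q\mathcal A^*$; (4) $(\mathcal A*_Q\mathcal B)*_Q\mathcal C=\mathcal A*_Q(\mathcal B*_Q\mathcal C)$ for every $\mathcal C\in\mathbb Q^{n_2\times n\times n_3}$; (5) $\mathcal A*_Q(\mathcal B+\mathcal C)=\mathcal A*_Q\mathcal B+\mathcal A*_Q\mathcal C$ for every $\mathcal C\in\mathbb Q^{m\times n_2\times n_3}$.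
   Context: $\mathbb Q$ denotes the real quaternions $a=a_0+a_1\mathbf i+a_2\mathbf j+a_3\mathbf k$ ($a_t\in\mathbb R$, $\mathbf i^2=\mathbf j^2=\mathbf k^2=-1$, $\mathbf{ij}=\mathbf k=-\mathbf{ji}$, $\mathbf{jk}=\mathbf i=-\mathbf{kj}$, $\mathbf{ki}=\mathbf j=-\mathbf{ik}$), with conjugate $a^*=a_0-a_1\mathbf i-a_2\mathbf j-a_3\mathbf k$ and $|a|=\sqrt{a^*a}$; $\mathbb C$ is identified with $\{a_0+a_1\mathbf i\}$. Every quaternion array $A=A_0+A_1\mathbf i+A_2\mathbf j+A_3\mathbf k$ (real $A_t$) is written uniquely as $A=A_{\mathbf d}+\mathbf jA_{\mathbf c}$ with $A_{\mathbf d}=A_0+A_1\mathbf i$, $A_{\mathbf c}=A_2-A_3\mathbf i$ complex. For a tensor $\mathcal A\in\mathbb Q^{n_1\times n_2\times n_3}$, $\mathcal A^{(s)}$ is its $s$-th frontal slice $\mathcal A(:,:,s)$. For a complex tensor $\mathcal C\in\mathbb C^{n_1\times n_2\times n_3}$, $\mathtt{bcirc}(\mathcal C)\in\mathbb C^{n_1n_3\times n_2n_3}$ is the block circulant matrix whose $(p,q)$ block ($1\le p,q\le n_3$) is $\mathcal C^{(((p-q)\bmod n_3)+1)}$. $P_{n_3}$ is the $n_3\times n_3$ permutation matrix whose first row is $e_1^T$ and whose $r$-th row, $r\ge2$, is $e_{n_3+2-r}^T$. The $z$-block circulant matrix of $\mathcal A=\mathcal A_{\mathbf d}+\mathbf j\mathcal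 A_{\mathbf c}$ is $\mathtt{bcirc_z}(\mathcal A)=\mathtt{bcirc}(\mathcal A_{\mathbf d})+\mathbf j\,\mathtt{bcirc}(\mathcal A_{\mathbf c})(P_{n_3}\otimes I_{n_2})\in\mathbb Q^{n_1n_3\times n_2n_3}$. $\mathtt{unfold}(\mathcal B)=[\mathcal B^{(1)};\dots;\mathcal B^{(n_3)}]$ (block column) and $\mathtt{fold}$ is its inverse. The QT-product of $\mathcal A\in\mathbb Q^{n_1\times r\times n_3}$ and $\mathcal B\in\mathbb Q^{r\times n_2\times n_3}$ is $\mathcal A*_Q\mathcal B=\mathtt{fold}(\mathtt{bcirc_z}(\mathcal A)\,\mathtt{unfold}(\mathcal B))\in\mathbb Q^{n_1\times n_2\times n_3}$. For a complex tensor $\mathcal C\in\mathbb C^{n_1\times n_2\times n_3}$, $\mathcal C^*\in\mathbb C^{n_2\times n_1\times n_3}$ has frontal slices $(\mathcal C^{(1)})^*$ and $(\mathcal C^* )^{(s)}=(\mathcal C^{(n_3+2-s)})^*$ for $s\ge2$. The conjugate transpose of $\mathcal A=\mathcal A_{\mathbf d}+\mathbf j\mathcal A_{\mathbf c}\in\mathbb Q^{n_1\times n_2\times n_3}$ is the tensor $\mathcal A^*\in\mathbb Q^{n_2\times n_1\times n_3}$ with $\mathtt{unfold}(\mathcal A^* )=\mathtt{unfold}(\mathcal A_{\mathbf d}^* )-(P_{n_3}\otimes I_{n_2})\mathtt{unfold}(\mathcal A_{\mathbf c}^* )\mathbf j$. For a quaternion matrix $M$, $\|M\|_2=\max_{\|x\|=1}\|Mx\|$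 (Euclidean norm $\|x\|=(\sum|x_i|^2)^{1/2}$ on quaternion vectors); a right eigenvalue of a square $M$ is $\lambda\in\mathbb Q$ with $Mx=x\lambda$ for some $x\ne0$, and $\rho(M)$ is the maximum of $|\lambda|$ over right eigenvalues. QT-spectral norm: $\|\mathcal A\|_s=\|\mathtt{bcirc_z}(\mathcal A)\|_2$; QT-spectral radius (square frontal slices): $\rho_{QT}(\mathcal A)=\rho(\mathtt{bcirc_z}(\mathcal A))$. *)

(* Defs.v *)
From HB Require Import structures.
From mathcomp Require Import all_boot all_order all_algebra.
From mathcomp Require Import ring zify.
From mathcomp Require Import classical_sets reals.
Set Implicit Arguments. Unset Strict Implicit. Unset Printing Implicit Defensive.
Import Order.TTheory GRing.Theory Num.Theory.
Local Open Scope ring_scope.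

Section Quaternion.
Variable R : realType.

Record quat := Quat { q0 : R; q1 : R; q2 : R; q3 : R }.

Definition quat_to (a : quat) := (q0 a, q1 a, q2 a, q3 a).
Definition quat_of (x : R * R * R * R) := let: (a, b, c, d) := x in Quat a b c d.
Lemma quat_toK : cancel quat_to quat_of. Proof. by case. Qed.
HB.instance Definition _ := Choice.copy quat (can_type quat_toK).

Definition qzero := Quat 0 0 0 0.
Definition qadd a b := Quat (q0 a + q0 b) (q1 a + q1 b) (q2 a + q2 b) (q3 a + q3 b).
Definition qopp a := Quat (- q0 a) (- q1 a) (- q2 a) (- q3 a).

Lemma qaddA : associative qadd.
Proof. by move=> [? ? ? ?] [? ? ? ?] [? ? ? ?]; rewrite /qadd /=; congr Quat; ring. Qed.
Lemma qaddC : commutative qadd.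
Proof. by move=> [? ? ? ?] [? ? ? ?]; rewrite /qadd /=; congr Quat; ring. Qed.
Lemma qadd0 : left_id qzero qadd.
Proof. by move=> [? ? ? ?]; rewrite /qadd /=; congr Quat; ring. Qed.
Lemma qaddN : left_inverse qzero qopp qadd.
Proof. by move=> [? ? ? ?]; rewrite /qadd /=; congr Quat; ring. Qed.
HB.instance Definition _ := GRing.isZmodule.Build quat qaddA qaddC qadd0 qaddN.

(* Hamilton product: i^2 = j^2 = k^2 = -1, ij = k = -ji, jk = i = -kj, ki = j = -ik *)
Definition qone := Quat 1 0 0 0.
Definition qmul a b := Quat
  (q0 a * q0 b - q1 a * q1 b - q2 a * q2 b - q3 a * q3 b)
  (q0 a * q1 b + q1 a * q0 b + q2 a * q3 b - q3 a * q2 b)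
  (q0 a * q2 b - q1 a * q3 b + q2 a * q0 b + q3 a * q1 b)
  (q0 a * q3 b + q1 a * q2 b - q2 a * q1 b + q3 a * q0 b).

Lemma qmulA : associative qmul.
Proof. by move=> [? ? ? ?] [? ? ? ?] [? ? ? ?]; rewrite /qmul /=; congr Quat; ring. Qed.
Lemma qmul1 : left_id qone qmul.
Proof. by move=> [? ? ? ?]; rewrite /qmul /=; congr Quat; ring. Qed.
Lemma qmulr1 : right_id qone qmul.
Proof. by move=> [? ? ? ?]; rewrite /qmul /=; congr Quat; ring. Qed.
Lemma qmulDl : left_distributive qmul qadd.
Proof. by move=> [? ? ? ?] [? ? ? ?] [? ? ? ?]; rewrite /qmul /qadd /=; congr Quat; ring. Qed.
Lemma qmulDr : right_distributive qmul qadd.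
Proof. by move=> [? ? ? ?] [? ? ? ?] [? ? ? ?]; rewrite /qmul /qadd /=; congr Quat; ring. Qed.
Lemma qone_neq0 : qone != 0.
Proof. by apply/eqP => -[] /eqP; rewrite oner_eq0. Qed.
HB.instance Definition _ :=
  GRing.Zmodule_isNzRing.Build quat qmulA qmul1 qmulr1 qmulDl qmulDr qone_neq0.

Definition qi : quat := Quat 0 1 0 0.
Definition qj : quat := Quat 0 0 1 0.
Definition qk : quat := Quat 0 0 0 1.

(* conjugate a^* (conj) and modulus |a| = sqrt(a^* a) (a^* a is a real quaternion) *)
Definition qconj (a : quat) := Quat (q0 a) (- q1 a) (- q2 a) (- q3 a).
Definition qabs (a : quat) : R := Num.sqrt (q0 (qconj a * a)).

(* complex numbers C are identified with {a0 + a1 i}; the unique splitting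
   a = a_d + j a_c with a_d = a0 + a1 i and a_c = a2 - a3 i (both complex) *)
Definition qdpart (a : quat) : quat := Quat (q0 a) (q1 a) 0 0.
Definition qcpart (a : quat) : quat := Quat (q2 a) (- q3 a) 0 0.

End Quaternion.

Lemma blk_proof n p (i : 'I_(n * p)) : (i %/ n < p)%N.
Proof.
case: i => k /= hk; case: n hk => [|n] hk; first by rewrite mul0n in hk.
by rewrite ltn_divLR // mulnC.
Qed.
Definition blk n p (i : 'I_(n * p)) : 'I_p := Ordinal (blk_proof i).

Lemma inblk_proof n p (i : 'I_(n * p)) : (i %% n < n)%N.
Proof.
case: i => k /= hk; case: n hk => [|n] hk; first by rewrite mul0n in hk.
by rewrite ltn_pmod.
Qed.
Definition inblk n p (i : 'I_(n * p)) : 'I_n := Ordinal (inblk_proof i).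

Lemma ordmod_proof n (r : 'I_n) k : (k %% n < n)%N.
Proof. by rewrite ltn_pmod // (leq_ltn_trans (leq0n r) (ltn_ord r)). Qed.
Definition ordsub n (p q : 'I_n) : 'I_n := Ordinal (ordmod_proof p (p + n - q)%N).
Definition ordneg n (r : 'I_n) : 'I_n := Ordinal (ordmod_proof r (n - r)%N).

Lemma bidx_proof n p (s : 'I_p) (i : 'I_n) : (s * n + i < n * p)%N.
Proof. have := ltn_ord s; have := ltn_ord i; nia. Qed.
Definition bidx n p (s : 'I_p) (i : 'I_n) : 'I_(n * p) := Ordinal (bidx_proof s i).

Section Tensors.
Variable R : realType.
Local Notation Q := (quat R).

(* third-order quaternion tensors: n3 frontal slices A^(s) = A s (0-based) *)
Definition qtensor n1 n2 n3 := {ffun 'I_n3 -> 'M[Q]_(n1, n2)}.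

Definition kron m n p q (A : 'M[Q]_(m, n)) (B : 'M[Q]_(p, q)) : 'M[Q]_(p * m, q * n) :=
  \matrix_(i, j) (A (blk i) (blk j) * B (inblk i) (inblk j)).

(* P_{n3}: first row e_1^T, row r >= 2 is e_{n3+2-r}^T (0-based: row r -> column (n3-r) mod n3) *)
Definition Pmx n : 'M[Q]_n := \matrix_(r, c) (if c == ordneg r then 1 else 0).

Definition bcirc n1 n2 n3 (C : qtensor n1 n2 n3) : 'M[Q]_(n1 * n3, n2 * n3) :=
  \matrix_(i, j) C (ordsub (blk i) (blk j)) (inblk i) (inblk j).

Definition tdpart n1 n2 n3 (A : qtensor n1 n2 n3) : qtensor n1 n2 n3 :=
  [ffun s => map_mx (@qdpart R) (A s)].
Definition tcpart n1 n2 n3 (A : qtensor n1 n2 n3) : qtensor n1 n2 n3 :=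
  [ffun s => map_mx (@qcpart R) (A s)].

Definition lmulj m n (M : 'M[Q]_(m, n)) : 'M[Q]_(m, n) := \matrix_(i, j) (qj R * M i j).
Definition rmulj m n (M : 'M[Q]_(m, n)) : 'M[Q]_(m, n) := \matrix_(i, j) (M i j * qj R).

Definition bcirc_z n1 n2 n3 (A : qtensor n1 n2 n3) : 'M[Q]_(n1 * n3, n2 * n3) :=
  bcirc (tdpart A) + lmulj (bcirc (tcpart A)) *m kron (Pmx n3) (1%:M : 'M[Q]_n2).

Definition tunfold n1 n2 n3 (B : qtensor n1 n2 n3) : 'M[Q]_(n1 * n3, n2) :=
  \matrix_(i, j) B (blk i) (inblk i) j.
Definition tfold n1 n2 n3 (M : 'M[Q]_(n1 * n3, n2)) : qtensor n1 n2 n3 :=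
  [ffun s => \matrix_(i, j) M (bidx s i) j].

Definition qtprod n1 r n2 n3 (A : qtensor n1 r n3) (B : qtensor r n2 n3) : qtensor n1 n2 n3 :=
  tfold (bcirc_z A *m tunfold B).

Definition mxconjT m n (M : 'M[Q]_(m, n)) : 'M[Q]_(n, m) := \matrix_(i, j) qconj (M j i).

(* C^* for a complex tensor: slice 1 is conjT(C^(1)), slice s >= 2 is
   conjT(C^(n3+2-s)); 0-based: slice s is conjT(C^((n3 - s) mod n3)) *)
Definition ctconjT n1 n2 n3 (C : qtensor n1 n2 n3) : qtensor n2 n1 n3 :=
  [ffun s => mxconjT (C (ordneg s))].

Definition qtconjT n1 n2 n3 (A : qtensor n1 n2 n3) : qtensor n2 n1 n3 :=
  tfold (tunfold (ctconjT (tdpart A))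
        - rmulj (kron (Pmx n3) (1%:M : 'M[Q]_n2) *m tunfold (ctconjT (tcpart A)))).

Definition vnorm n (x : 'cV[Q]_n) : R := Num.sqrt (\sum_i qabs (x i 0) ^+ 2).
Definition mx2norm m n (M : 'M[Q]_(m, n)) : R :=
  sup [set vnorm (M *m x) | x in [set x : 'cV[Q]_n | vnorm x = 1]].

Definition right_eigenvalue n (M : 'M[Q]_n) (l : Q) : Prop :=
  exists x : 'cV[Q]_n, x != 0 /\ M *m x = \matrix_(i, j) (x i j * l).
Definition spec_radius n (M : 'M[Q]_n) : R :=
  sup [set qabs l | l in [set l | right_eigenvalue M l]].

Definition qt_snorm n1 n2 n3 (A : qtensor n1 n2 n3) : R := mx2norm (bcirc_z A).
Definition qt_srad n1 n3 (A : qtensor n1 n1 n3) : R := spec_radius (bcirc_z A).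

Definition qtcast n1 m m' n3 (e : m = m') (A : qtensor n1 m n3) : qtensor n1 m' n3 :=
  [ffun s => castmx (erefl n1, e) (A s)].

End Tensors.

(* Main.v *)
Require Import Defs.
From HB Require Import structures.
From mathcomp Require Import all_boot all_order all_algebra.
From mathcomp Require Import ring lra zify.
From mathcomp Require Import boolp classical_sets reals.
Set Implicit Arguments. Unset Strict Implicit. Unset Printing Implicit Defensive.
Import Order.TTheory GRing.Theory Num.Theory.
Local Open Scope ring_scope.

Section QuatLemmas.
Variable R : realType.
Local Notation Q := (quat R).
Implicit Types x y z : Q.

Lemma qmulE x y : x * y = qmul x y. Proof. by []. Qed.
Lemma qaddE x y : x + y = qadd x y. Proof. by []. Qed.
Lemma qoppE x : - x = qopp x. Proof. by []. Qed.
Lemma q0E : 0 = qzero R. Proof. by []. Qed.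
Lemma q1E : 1 = qone R. Proof. by []. Qed.

Ltac qs := rewrite ?qmulE ?qaddE ?qoppE ?q0E ?q1E;
  repeat match goal with x : quat _ |- _ => destruct x end;
  rewrite /qmul /qadd /qopp /qzero /qone /qdpart /qcpart /qconj /qj /=;
  congr Quat; ring.

Local Notation qd := (@qdpart R).
Local Notation qc := (@qcpart R).
Local Notation qJ := (qj R).

Lemma qsplit x : x = qd x + qJ * qc x. Proof. qs. Qed.
Lemma qdM x y : qd (x * y) = qd x * qd y - qconj (qc x) * qc y. Proof. qs. Qed.
Lemma qcM x y : qc (x * y) = qconj (qd x) * qc y + qc x * qd y. Proof. qs. Qed.
Lemma qdD x y : qd (x + y) = qd x + qd y. Proof. qs. Qed.
Lemma qcD x y : qc (x + y) = qc x + qc y. Proof. qs. Qed.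
Lemma qd0 : qd 0 = 0. Proof. qs. Qed.
Lemma qc0 : qc 0 = 0. Proof. qs. Qed.
Lemma qdz x y : qd (qd x + qJ * qc y) = qd x. Proof. qs. Qed.
Lemma qcz x y : qc (qd x + qJ * qc y) = qc y. Proof. qs. Qed.
Lemma qconjD x y : qconj (x + y) = qconj x + qconj y. Proof. qs. Qed.
Lemma qconj0 : qconj 0 = 0 :> Q. Proof. qs. Qed.
Lemma qconjM x y : qconj (x * y) = qconj y * qconj x. Proof. qs. Qed.
Lemma qprodz x1 y1 x2 y2 :
  (qd x1 + qJ * qc y1) * (qd x2 + qJ * qc y2) =
  (qd x1 * qd x2 - qconj (qc y1) * qc y2) +
  qJ * (qconj (qd x1) * qc y2 + qc y1 * qd x2).
Proof. qs. Qed.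
Lemma qdsum I (r : seq I) P (F : I -> Q) :
  qd (\sum_(i <- r | P i) F i) = \sum_(i <- r | P i) qd (F i).
Proof. exact: (big_morph _ qdD qd0). Qed.
Lemma qcsum I (r : seq I) P (F : I -> Q) :
  qc (\sum_(i <- r | P i) F i) = \sum_(i <- r | P i) qc (F i).
Proof. exact: (big_morph _ qcD qc0). Qed.
Lemma qconjsum I (r : seq I) P (F : I -> Q) :
  qconj (\sum_(i <- r | P i) F i) = \sum_(i <- r | P i) qconj (F i).
Proof. exact: (big_morph _ qconjD qconj0). Qed.
Lemma qconjz x y : qconj (qd x + qJ * qc y) = qconj (qd x) - qJ * qc y.
Proof. qs. Qed.
Lemma qdT x y : qd (qconj (qd x) - qconj (qc y) * qJ) = qconj (qd x). Proof. qs. Qed.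
Lemma qcT x y : qc (qconj (qd x) - qconj (qc y) * qJ) = - qc y. Proof. qs. Qed.
Lemma qdd x : qd (qd x) = qd x. Proof. qs. Qed.
Lemma qcd x : qc (qd x) = qc (qc x) * 0. Proof. qs. Qed.
Lemma blk_bidx n p (s : 'I_p) (i : 'I_n) : blk (bidx s i) = s.
Proof.
apply: val_inj => /=; have n0 : (0 < n)%N by case: i => i /=; lia.
by rewrite divnMDl // divn_small ?addn0.
Qed.
Lemma inblk_bidx n p (s : 'I_p) (i : 'I_n) : inblk (bidx s i) = i.
Proof. by apply: val_inj => /=; rewrite modnMDl modn_small. Qed.
Lemma bidx_blk n p (i : 'I_(n * p)) : bidx (blk i) (inblk i) = i.
Proof. by apply: val_inj => /=; rewrite -divn_eq. Qed.

Lemma big_bidx (V : nmodType) n p (F : 'I_(n * p) -> V) :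
  \sum_(i < n * p) F i = \sum_(s < p) \sum_(k < n) F (bidx s k).
Proof.
rewrite pair_big /=.
rewrite (reindex (fun sk : 'I_p * 'I_n => bidx sk.1 sk.2)) //=.
exists (fun i => (blk i, inblk i)) => [[s k] _|i _] /=.
  by rewrite blk_bidx inblk_bidx.
by rewrite bidx_blk.
Qed.

Lemma ordsubE n (p q : 'I_n.+1) : ordsub p q = p - q.
Proof.
apply: val_inj => /=; rewrite modnDmr addnBA //; exact: ltnW (ltn_ord q).
Qed.
Lemma ordnegE n (r : 'I_n.+1) : ordneg r = - r.
Proof. by apply: val_inj. Qed.

Section Bz.
Variable n : nat.
Local Notation N := n.+1.

Lemma bzE n1 n2 (X : qtensor R n1 n2 N) i j :
  bcirc_z X i j = qd (X (blk i - blk j) (inblk i) (inblk j))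
                 + qJ * qc (X (blk i + blk j) (inblk i) (inblk j)).
Proof.
rewrite /bcirc_z !mxE /tdpart ffunE mxE ordsubE; congr (_ + _).
rewrite big_bidx (bigD1 (- blk j)) //= [X in _ + X]big1 ?addr0; last first.
  move=> s /negbTE hs; apply: big1 => c _.
  rewrite !mxE blk_bidx ordnegE.
  have -> : (blk j == - s) = false.
    by apply/negbTE; apply: contraFN hs => /eqP ->; rewrite opprK.
  by rewrite mul0r mulr0.
rewrite (bigD1 (inblk j)) //= [X in _ + X]big1 ?addr0; last first.
  move=> c /negbTE hc; rewrite !mxE blk_bidx inblk_bidx hc /=.
  by rewrite mulr0 mulr0.
rewrite !mxE blk_bidx inblk_bidx ordnegE opprK !eqxx mul1r mulr1.
by rewrite /tcpart ffunE mxE ordsubE opprK.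
Qed.

Lemma sum_shift (V : zmodType) (F : 'I_N -> V) (q : 'I_N) :
  \sum_r F r = \sum_r F (r + q).
Proof. exact: (reindex_inj (addIr q)). Qed.

Lemma sum2z m (F G : 'I_N -> 'I_m -> Q) :
  \sum_r \sum_k (F r k + qJ * G r k) =
  \sum_r \sum_k F r k + qJ * \sum_r \sum_k G r k.
Proof.
rewrite mulr_sumr -big_split; apply: eq_bigr => r _.
by rewrite mulr_sumr -big_split.
Qed.
Lemma sum2B m (F G : 'I_N -> 'I_m -> Q) :
  \sum_r \sum_k (F r k - G r k) = \sum_r \sum_k F r k - \sum_r \sum_k G r k.
Proof. rewrite -sumrB; apply: eq_bigr => r _; by rewrite sumrB. Qed.
Lemma sum2D m (F G : 'I_N -> 'I_m -> Q) :
  \sum_r \sum_k (F r k + G r k) = \sum_r \sum_k F r k + \sum_r \sum_k G r k.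
Proof. rewrite -big_split; apply: eq_bigr => r _; by rewrite big_split. Qed.

Lemma prodE n1 m n2 (A : qtensor R n1 m N) (B : qtensor R m n2 N) s a b :
  qtprod A B s a b =
  \sum_(r < N) \sum_(k < m) bcirc_z A (bidx s a) (bidx r k) * B r k b.
Proof.
rewrite /qtprod /tfold ffunE !mxE big_bidx; apply: eq_bigr => r _.
by apply: eq_bigr => k _; rewrite /tunfold [X in _ * X]mxE blk_bidx inblk_bidx.
Qed.

Lemma prodE2 n1 m n2 (A : qtensor R n1 m N) (B : qtensor R m n2 N) s a b :
  qtprod A B s a b =
  \sum_(r < N) \sum_(k < m) (qd (A (s - r) a k) + qJ * qc (A (s + r) a k)) * B r k b.
Proof.
rewrite prodE; apply: eq_bigr => r _; apply: eq_bigr => k _.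
by rewrite bzE !blk_bidx !inblk_bidx.
Qed.

Lemma qd_prod n1 m n2 (A : qtensor R n1 m N) (B : qtensor R m n2 N) s a b :
  qd (qtprod A B s a b) =
  \sum_(r < N) \sum_(k < m) qd (A (s - r) a k) * qd (B r k b)
  - \sum_(r < N) \sum_(k < m) qconj (qc (A (s + r) a k)) * qc (B r k b).
Proof.
rewrite prodE2 -sum2B qdsum; apply: eq_bigr => r _; rewrite qdsum.
by apply: eq_bigr => k _; rewrite qdM qdz qcz.
Qed.

Lemma qc_prod n1 m n2 (A : qtensor R n1 m N) (B : qtensor R m n2 N) s a b :
  qc (qtprod A B s a b) =
  \sum_(r < N) \sum_(k < m) qconj (qd (A (s - r) a k)) * qc (B r k b)
  + \sum_(r < N) \sum_(k < m) qc (A (s + r) a k) * qd (B r k b).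
Proof.
rewrite prodE2 -sum2D qcsum; apply: eq_bigr => r _; rewrite qcsum.
by apply: eq_bigr => k _; rewrite qcM qdz qcz.
Qed.

Lemma bzbzE n1 m n2 (A : qtensor R n1 m N) (B : qtensor R m n2 N) i j :
  (bcirc_z A *m bcirc_z B) i j =
  (\sum_(r < N) \sum_(k < m) qd (A (blk i - r) (inblk i) k) * qd (B (r - blk j) k (inblk j))
  - \sum_(r < N) \sum_(k < m) qconj (qc (A (blk i + r) (inblk i) k)) * qc (B (r + blk j) k (inblk j)))
  + qJ * (\sum_(r < N) \sum_(k < m) qconj (qd (A (blk i - r) (inblk i) k)) * qc (B (r + blk j) k (inblk j))
  + \sum_(r < N) \sum_(k < m) qc (A (blk i + r) (inblk i) k) * qd (B (r - blk j) k (inblk j))).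
Proof.
rewrite mxE big_bidx -sum2B -sum2D -sum2z; apply: eq_bigr => r _.
by apply: eq_bigr => k _; rewrite !bzE !blk_bidx !inblk_bidx qprodz.
Qed.

Lemma bzM n1 m n2 (A : qtensor R n1 m N) (B : qtensor R m n2 N) :
  bcirc_z (qtprod A B) = bcirc_z A *m bcirc_z B.
Proof.
apply/matrixP => i j; rewrite bzE qd_prod qc_prod bzbzE.
congr (_ - _ + qJ * (_ + _)).
- rewrite [RHS](sum_shift _ (blk j)); apply: eq_bigr => r _.
  by rewrite addrK opprD addrA addrAC.
- rewrite [RHS](sum_shift _ (- blk j)); apply: eq_bigr => r _.
  by rewrite subrK addrA addrAC.
- rewrite [RHS](sum_shift _ (- blk j)); apply: eq_bigr => r _.
  by rewrite subrK opprB addrA.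
- rewrite [RHS](sum_shift _ (blk j)); apply: eq_bigr => r _.
  by rewrite addrK addrA addrAC.
Qed.

Lemma tunfoldK n1 n2 (M : 'M[Q]_(n1 * N, n2)) : tunfold (tfold M) = M.
Proof. by apply/matrixP => i b; rewrite !mxE ffunE mxE bidx_blk. Qed.

Lemma recover n1 n2 (X : qtensor R n1 n2 N) s a b :
  X s a b = bcirc_z X (bidx s a) (bidx 0 b).
Proof. by rewrite bzE !blk_bidx !inblk_bidx subr0 addr0 -qsplit. Qed.

Lemma prod_recover n1 m n2 (A : qtensor R n1 m N) (B : qtensor R m n2 N) s a b :
  qtprod A B s a b = (bcirc_z A *m bcirc_z B) (bidx s a) (bidx 0 b).
Proof. by rewrite recover bzM. Qed.

Lemma qtprodA n1 m n2 n4 (A : qtensor R n1 m N) (B : qtensor R m n2 N)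
   (C : qtensor R n2 n4 N) :
  qtprod (qtprod A B) C = qtprod A (qtprod B C).
Proof.
apply/ffunP => s; apply/matrixP => a b.
by rewrite !prod_recover !bzM mulmxA.
Qed.

Lemma qtprodDr n1 m n2 (A : qtensor R n1 m N) (B C : qtensor R m n2 N) :
  qtprod A (B + C) = qtprod A B + qtprod A C.
Proof.
rewrite /qtprod.
have -> : tunfold (B + C) = tunfold B + tunfold C.
  by apply/matrixP => i b; rewrite !mxE !ffunE mxE.
apply/ffunP => s; apply/matrixP => a b.
by rewrite mulmxDr !ffunE !mxE.
Qed.

Lemma mxconjT_mul m1 m2 m3 (M : 'M[Q]_(m1, m2)) (P : 'M[Q]_(m2, m3)) :
  mxconjT (M *m P) = mxconjT P *m mxconjT M.
Proof.
apply/matrixP => i j; rewrite !mxE qconjsum; apply: eq_bigr => k _.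
by rewrite !mxE qconjM.
Qed.

Lemma conjE n1 n2 (X : qtensor R n1 n2 N) s a b :
  qtconjT X s a b = qconj (qd (X (- s) b a)) - qconj (qc (X s b a)) * qJ.
Proof.
rewrite /qtconjT /tfold ffunE !mxE blk_bidx inblk_bidx.
rewrite /ctconjT /tdpart !ffunE !mxE ordnegE; congr (_ - _ * _).
rewrite big_bidx (bigD1 (- s)) //= [X in _ + X]big1 ?addr0; last first.
  move=> r /negbTE hr; apply: big1 => c _.
  by rewrite !mxE !blk_bidx ordnegE hr mul0r mul0r.
rewrite (bigD1 a) //= [X in _ + X]big1 ?addr0; last first.
  move=> c /negbTE hc; rewrite !mxE !blk_bidx !inblk_bidx (eq_sym a c) hc.
  by rewrite mulr0 mul0r.
rewrite !mxE !blk_bidx !inblk_bidx !ordnegE !eqxx mul1r mulr1n mul1r.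
by rewrite /tcpart !ffunE !mxE ordnegE opprK.
Qed.

Lemma bzT n1 n2 (X : qtensor R n1 n2 N) :
  bcirc_z (qtconjT X) = mxconjT (bcirc_z X).
Proof.
apply/matrixP => i j; rewrite bzE !conjE qdT qcT mxE bzE qconjz.
by rewrite opprB (addrC (blk i)) mulrN.
Qed.

Lemma qtconjM n1 m n2 (A : qtensor R n1 m N) (B : qtensor R m n2 N) :
  qtconjT (qtprod A B) = qtprod (qtconjT B) (qtconjT A).
Proof.
apply/ffunP => s; apply/matrixP => a b.
by rewrite prod_recover recover !bzT bzM mxconjT_mul.
Qed.
End Bz.
Section Norms.
Definition nsq (a : Q) : R := q0 a ^+ 2 + q1 a ^+ 2 + q2 a ^+ 2 + q3 a ^+ 2.

Lemma nsq_ge0 a : 0 <= nsq a.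
Proof. by rewrite /nsq !addr_ge0 // sqr_ge0. Qed.

Lemma qabsE a : qabs a = Num.sqrt (nsq a).
Proof.
rewrite /qabs; congr Num.sqrt; case: a => a0 a1 a2 a3.
by rewrite qmulE /qmul /qconj /nsq /=; ring.
Qed.

Lemma nsqM a b : nsq (a * b) = nsq a * nsq b.
Proof. case: a b => [a0 a1 a2 a3] [b0 b1 b2 b3]; rewrite qmulE /nsq /qmul /=; ring. Qed.

Lemma nsqD2 a b : nsq (a + b) <= 2 * (nsq a + nsq b).
Proof.
case: a b => [a0 a1 a2 a3] [b0 b1 b2 b3]; rewrite qaddE /nsq /qadd /=.
have := sqr_ge0 (a0 - b0); have := sqr_ge0 (a1 - b1).
have := sqr_ge0 (a2 - b2); have := sqr_ge0 (a3 - b3).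
nra.
Qed.

Lemma nsq0 : nsq 0 = 0.
Proof. by rewrite /nsq /= expr0n /= !addr0. Qed.

Lemma nsq_eq0 a : nsq a = 0 -> a = 0.
Proof.
case: a => a0 a1 a2 a3; rewrite /nsq /= => h.
have h0 : a0 = 0 by nra.
have h1 : a1 = 0 by nra.
have h2 : a2 = 0 by nra.
have h3 : a3 = 0 by nra.
by rewrite h0 h1 h2 h3.
Qed.

Lemma nsq_sum p (F : 'I_p -> Q) :
  nsq (\sum_i F i) <= 2 ^+ p * \sum_i nsq (F i).
Proof.
elim: p F => [|p IH] F; first by rewrite !big_ord0 nsq0 expr0 mulr0.
rewrite !big_ord_recl; apply: le_trans (nsqD2 _ _) _.
have h1 := IH (fun i => F (lift ord0 i)).
have hs : 0 <= \sum_(i < p) nsq (F (lift ord0 i)) by apply: sumr_ge0 => i _; apply: nsq_ge0.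
have h0 := nsq_ge0 (F ord0).
have h2 : 1 <= 2 ^+ p :> R by rewrite exprn_ege1 // ler1n.
rewrite exprS.
nra.
Qed.

Definition Ssq n (x : 'cV[Q]_n) : R := \sum_i nsq (x i 0).

Lemma Ssq_ge0 n (x : 'cV[Q]_n) : 0 <= Ssq x.
Proof. by apply: sumr_ge0 => i _; apply: nsq_ge0. Qed.

Lemma vnormE n (x : 'cV[Q]_n) : vnorm x = Num.sqrt (Ssq x).
Proof.
rewrite /vnorm /Ssq; congr Num.sqrt; apply: eq_bigr => i _.
by rewrite qabsE sqr_sqrtr // nsq_ge0.
Qed.

Lemma nsq_le_Ssq n (x : 'cV[Q]_n) k : nsq (x k 0) <= Ssq x.
Proof.
rewrite /Ssq (bigD1 k) //= lerDl; apply: sumr_ge0 => i _; apply: nsq_ge0.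
Qed.

Definition Kmx p q (M : 'M[Q]_(p, q)) : R := 2 ^+ q * \sum_i \sum_k nsq (M i k).

Lemma Ssq_mul p q (M : 'M[Q]_(p, q)) (x : 'cV[Q]_q) : Ssq (M *m x) <= Kmx M * Ssq x.
Proof.
rewrite /Ssq /Kmx -mulrA mulr_suml mulr_sumr; apply: ler_sum => i _.
rewrite mxE; apply: le_trans (nsq_sum _) _.
apply: ler_wpM2l; first by apply: exprn_ge0.
rewrite mulr_suml; apply: ler_sum => k _; rewrite nsqM; apply: ler_wpM2l; first exact: nsq_ge0.
exact: nsq_le_Ssq.
Qed.

Definition rscale n (x : 'cV[Q]_n) (c : Q) : 'cV[Q]_n := \matrix_(i, j) (x i j * c).

Lemma mul_rscale p q (M : 'M[Q]_(p, q)) (x : 'cV[Q]_q) c : M *m rscale x c = rscale (M *m x) c.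
Proof.
apply/matrixP => i j; rewrite !mxE mulr_suml; apply: eq_bigr => k _.
by rewrite mxE mulrA.
Qed.

Lemma vnorm_rscale n (x : 'cV[Q]_n) c : vnorm (rscale x c) = vnorm x * qabs c.
Proof.
rewrite !vnormE qabsE -sqrtrM ?Ssq_ge0 //; congr Num.sqrt.
rewrite /Ssq mulr_suml; apply: eq_bigr => i _; by rewrite mxE nsqM.
Qed.

Definition Eset p q (M : 'M[Q]_(p, q)) :=
  image (mkset (fun v : 'cV[Q]_q => vnorm v = 1)) (fun v => vnorm (M *m v)).

Lemma Eset_ub p q (M : 'M[Q]_(p, q)) : has_ubound (Eset M).
Proof.
exists (Num.sqrt (Kmx M)) => _ [x /= hx <-].
have : Ssq x = 1.
  by move: hx; rewrite vnormE => h; rewrite -(sqr_sqrtr (Ssq_ge0 x)) h expr1n.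
move=> h1; rewrite vnormE; apply: ler_wsqrtr.
by have := Ssq_mul M x; rewrite h1 mulr1.
Qed.

Lemma mx2norm_ge0 p q (M : 'M[Q]_(p, q)) : 0 <= mx2norm M.
Proof.
rewrite /mx2norm; case: (pselect (exists w : R, Eset M w)) => [[y Ey]|hE].
  apply: le_trans (ub_le_sup (Eset_ub M) Ey).
  by case: Ey => x _ <-; rewrite vnormE sqrtr_ge0.
by rewrite sup_out // => -[].
Qed.

Lemma mx2norm_bound p q (M : 'M[Q]_(p, q)) (x : 'cV[Q]_q) :
  vnorm (M *m x) <= mx2norm M * vnorm x.
Proof.
have [hx|hx] := leP (Ssq x) 0.
  rewrite !vnormE.
  have -> : Num.sqrt (Ssq (M *m x)) = 0.
    apply/eqP; rewrite sqrtr_eq0; apply: le_trans (Ssq_mul M x) _.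
    have -> : Ssq x = 0 by apply/eqP; rewrite eq_le hx Ssq_ge0.
    by rewrite mulr0.
  by rewrite mulr_ge0 ?sqrtr_ge0 ?mx2norm_ge0.
set t := vnorm x.
have tp : 0 < t by rewrite /t vnormE sqrtr_gt0.
pose c : Q := Quat t^-1 0 0 0.
have hc : qabs c = t^-1.
  rewrite qabsE /nsq /= expr0n /= !addr0 sqrtr_sqr ger0_norm //.
  by rewrite invr_ge0 ltW.
have hy : vnorm (rscale x c) = 1 by rewrite vnorm_rscale hc divff // gt_eqF.
have : Eset M (vnorm (M *m rscale x c)) by exists (rscale x c).
move/(ub_le_sup (Eset_ub M)); rewrite mul_rscale vnorm_rscale hc.
by rewrite ler_pdivrMr.
Qed.

Lemma mx2normM p q r (M : 'M[Q]_(p, q)) (P : 'M[Q]_(q, r)) :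
  mx2norm (M *m P) <= mx2norm M * mx2norm P.
Proof.
case: (pselect (exists w : R, Eset (M *m P) w)) => [hE|hE]; last first.
  by rewrite /mx2norm sup_out ?mulr_ge0 ?mx2norm_ge0 // => -[].
apply: ge_sup => // _ [x /= hx <-].
rewrite -mulmxA; apply: le_trans (mx2norm_bound _ _) _.
apply: ler_wpM2l; first exact: mx2norm_ge0.
by have := mx2norm_bound P x; rewrite hx mulr1.
Qed.

Lemma specr_le p (M : 'M[Q]_p) : spec_radius M <= mx2norm M.
Proof.
rewrite /spec_radius.
set F := image _ _.
case: (pselect (exists w : R, F w)) => [hE|hE]; last first.
  by rewrite sup_out ?mx2norm_ge0 // => -[].
apply: ge_sup => // _ [l [x [x0 hx]] <-].
have Sp : 0 < Ssq x.
  rewrite lt_def Ssq_ge0 andbT; apply: contra x0 => /eqP h.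
  apply/eqP/matrixP => i j; rewrite ord1 mxE; apply: nsq_eq0.
  move: (psumr_eq0P (P := predT) (F := fun i => nsq (x i 0))) => /(_ _ h i isT).
  by apply => k _; apply: nsq_ge0.
have := mx2norm_bound M x; rewrite hx.
have -> : \matrix_(i, j) (x i j * l) = rscale x l by [].
rewrite vnorm_rscale mulrC ler_pM2r //.
by rewrite vnormE sqrtr_gt0.
Qed.
End Norms.
End QuatLemmas.

Lemma qtcast_id (R : realType) n1 n3 (A : qtensor R n1 n1 n3) (e : n1 = n1) :
  qtcast e A = A.
Proof.
by apply/ffunP => s; rewrite ffunE (eq_axiomK e) castmx_id.
Qed.

Theorem lemma2p15 (R : realType) (n1 m n2 n3 : nat)
    (A : qtensor R n1 m n3) (B : qtensor R m n2 n3) :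
  [/\ (forall e : m = n1, qt_srad (qtcast e A) <= qt_snorm A),
      qt_snorm (qtprod A B) <= qt_snorm A * qt_snorm B,
      qtconjT (qtprod A B) = qtprod (qtconjT B) (qtconjT A),
      (forall (n : nat) (C : qtensor R n2 n n3),
          qtprod (qtprod A B) C = qtprod A (qtprod B C))
    & (forall C : qtensor R m n2 n3, qtprod A (B + C) = qtprod A B + qtprod A C)].
Proof.
have P1 : forall e : m = n1, qt_srad (qtcast e A) <= qt_snorm A.
  move=> e; subst n1.
  by rewrite qtcast_id; apply: specr_le.
case: n3 A B P1 => [|n] A B P1.
  have Z0 : forall p q (M P : 'M[quat R]_(p * 0, q)), M = P.
    by move=> p q M P; apply/matrixP => i; have := ltn_ord i; lia.
  have E0 : forall p q (X Y : qtensor R p q 0), X = Y.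
    by move=> p q X Y; apply/ffunP => -[s hs].
  split => //; try by move=> *; apply: E0.
  rewrite /qt_snorm (Z0 _ _ (bcirc_z (qtprod A B)) (bcirc_z A *m bcirc_z B)).
  exact: mx2normM.
split => //.
- by rewrite /qt_snorm bzM; apply: mx2normM.
- exact: qtconjM.
- by move=> k C; apply: qtprodA.
- by move=> C; apply: qtprodDr.
Qed.
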